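(* Let $G$ be a group, $\partial$ an endomorphism of $G$, and $a,\sigma$ fixed elements of $G$. Write $\sigma_i=\partial^{i-1}(\sigma)$ and $a_i=\partial^{i-1}(a)$ for $i\ge1$, and let $H$ be the subgroup of $G$ generated by all $\sigma_i$ and $a_i$. Define $x*y=x\cdot\partial y\cdot\sigma\cdot\partial x^{-1}$ and $x\circ y=x\cdot\partial y\cdot a$. Then $(H,*,\circ)$ is an ALD-system if and only if the elements $\sigma_i,a_i$ satisfy the relations: $\sigma_j\sigma_i=\sigma_i\sigma_j$ and $a_j\sigma_i=\sigma_ia_j$ for $j\ge i+2$; $a_j\sigma_i=\sigma_{i+1}a_j$ and $a_ja_i=a_{i+1}a_j$ for $j\le i-1$; $\sigma_j\sigma_i\sigma_j=\sigma_i\sigma_j\sigma_i$, $\sigma_i\sigma_ja_i=a_j\sigma_i$ and $\sigma_j\sigma_ia_j=a_i\sigma_i$ for $j=i+1$ (i.e., if and only if $H$ is a homomorphic image of $B_\bullet$ via $\sigma_i\mapsto\sigma_i$, $a_i\mapsto a_i$).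
   Context: An ALD-system is a set with two binary operations $*,\circ$ satisfying $x*(y*z)=(x*y)*(x*z)$, $x*(y*z)=(x\circ y)*z$ and $x*(y\circ z)=(x*y)\circ(x*z)$. $B_\bullet$ denotes the group presented by generators $\sigma_1,\sigma_2,\dots,a_1,a_2,\dots$ and the relations listed in the claim. *)

(* Defs.v *)
Set Implicit Arguments.
Unset Strict Implicit.

Record Group := {
  gcar :> Type;
  gmul : gcar -> gcar -> gcar;
  ginv : gcar -> gcar;
  gone : gcar;
  gmulA : forall x y z, gmul x (gmul y z) = gmul (gmul x y) z;
  gmul1l : forall x, gmul gone x = x;
  gmul1r : forall x, gmul x gone = x;
  gmulVl : forall x, gmul (ginv x) x = gone;
  gmulVr : forall x, gmul x (ginv x) = gone
}.

Arguments gmul {g} _ _.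
Arguments ginv {g} _.
Arguments gone {g}.

Definition is_endo (G : Group) (d : G -> G) : Prop :=
  forall x y : G, d (gmul x y) = gmul (d x) (d y).

Definition idx (G : Group) (d : G -> G) (x : G) (i : nat) : G :=
  Nat.iter (i - 1) d x.

Inductive gen_sub (G : Group) (d : G -> G) (s a : G) : G -> Prop :=
  | gen_sig : forall i, 1 <= i -> gen_sub d s a (idx d s i)
  | gen_a : forall i, 1 <= i -> gen_sub d s a (idx d a i)
  | gen_one : gen_sub d s a gone
  | gen_mul : forall x y, gen_sub d s a x -> gen_sub d s a y -> gen_sub d s a (gmul x y)
  | gen_inv : forall x, gen_sub d s a x -> gen_sub d s a (ginv x).

Definition star (G : Group) (d : G -> G) (s : G) (x y : G) : G :=
  gmul (gmul (gmul x (d y)) s) (ginv (d x)).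

Definition circ (G : Group) (d : G -> G) (a : G) (x y : G) : G :=
  gmul (gmul x (d y)) a.

Definition is_ALD (T : Type) (P : T -> Prop) (op1 op2 : T -> T -> T) : Prop :=
  (forall x y, P x -> P y -> P (op1 x y)) /\
  (forall x y, P x -> P y -> P (op2 x y)) /\
  (forall x y z, P x -> P y -> P z ->
     op1 x (op1 y z) = op1 (op1 x y) (op1 x z) /\
     op1 x (op1 y z) = op1 (op2 x y) z /\
     op1 x (op2 y z) = op2 (op1 x y) (op1 x z)).

Definition B_relations (G : Group) (d : G -> G) (s a : G) : Prop :=
  let sg := idx d s in
  let al := idx d a in
  forall i j : nat, 1 <= i -> 1 <= j ->
    (i + 2 <= j ->
       gmul (sg j) (sg i) = gmul (sg i) (sg j) /\
       gmul (al j) (sg i) = gmul (sg i) (al j)) /\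
    (j <= i - 1 ->
       gmul (al j) (sg i) = gmul (sg (i + 1)) (al j) /\
       gmul (al j) (al i) = gmul (al (i + 1)) (al j)) /\
    (j = i + 1 ->
       gmul (gmul (sg j) (sg i)) (sg j) = gmul (gmul (sg i) (sg j)) (sg i) /\
       gmul (gmul (sg i) (sg j)) (al i) = gmul (al j) (sg i) /\
       gmul (gmul (sg j) (sg i)) (al j) = gmul (al i) (sg i)).

(* Main.v *)
Require Import Defs.
From Stdlib Require Import Lia PeanoNat.

Section S.
Context {G : Group}.
Local Notation "x ⋅ y" := (@gmul G x y) (at level 40, left associativity).
Local Notation "x ^-1" := (@ginv G x) (at level 3).
Lemma gcancel_l (x y z : G) : x ⋅ y = x ⋅ z -> y = z.
Proof. intro h. rewrite <- (gmul1l y), <- (gmul1l z), <- (gmulVl x), <- !gmulA, h. reflexivity. Qed.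
Lemma gcancel_r (x y z : G) : y ⋅ x = z ⋅ x -> y = z.
Proof. intro h. rewrite <- (gmul1r y), <- (gmul1r z), <- (gmulVr x), !gmulA, h. reflexivity. Qed.
Lemma gKl (x r : G) : x ⋅ (x^-1 ⋅ r) = r.
Proof. rewrite gmulA, gmulVr, gmul1l; reflexivity. Qed.
Lemma gKVl (x r : G) : x^-1 ⋅ (x ⋅ r) = r.
Proof. rewrite gmulA, gmulVl, gmul1l; reflexivity. Qed.
Lemma ginv_mul (x y : G) : (x ⋅ y)^-1 = y^-1 ⋅ x^-1.
Proof. apply (gcancel_l (x ⋅ y)). rewrite gmulVr, <- gmulA, gKl, gmulVr. reflexivity. Qed.
Lemma ginv_inv (x : G) : (x^-1)^-1 = x.
Proof. apply (gcancel_l (x^-1)). rewrite gmulVr, gmulVl. reflexivity. Qed.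
Lemma ginv_one : (@gone G)^-1 = gone.
Proof. rewrite <- (gmul1l (gone^-1)), gmulVr. reflexivity. Qed.
Variable d : G -> G.
Hypothesis E : is_endo d.
Lemma d_one : d gone = gone.
Proof. apply (gcancel_l (d gone)). rewrite <- E, !gmul1r. reflexivity. Qed.
Lemma d_inv x : d (x^-1) = (d x)^-1.
Proof. apply (gcancel_l (d x)). rewrite <- E, !gmulVr. apply d_one. Qed.
End S.

Ltac gnorm E := repeat progress rewrite ?E, ?(d_inv _ E), ?(d_one _ E), ?ginv_mul, ?ginv_inv, ?ginv_one, <- ?gmulA, ?gmul1l, ?gmul1r, ?gKl, ?gKVl, ?gmulVr, ?gmulVl.
Ltac gnormH E H := repeat progress rewrite ?E, ?(d_inv _ E), ?(d_one _ E), ?ginv_mul, ?ginv_inv, ?ginv_one, <- ?gmulA, ?gmul1l, ?gmul1r, ?gKl, ?gKVl, ?gmulVr, ?gmulVl in H.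

Section M.
Variable G : Group.
Local Notation "x ⋅ y" := (@gmul G x y) (at level 40, left associativity).
Local Notation "x ^-1" := (@ginv G x) (at level 3).

Lemma comm_deriv (s a Y Y0 ds da : G) : ds⋅s = a⋅(s⋅da^-1) ->
  Y0⋅(ds⋅(Y^-1⋅s)) = Y0⋅(a⋅(s⋅(da^-1⋅Y^-1))) -> s⋅Y = Y⋅s.
Proof.
  intros e2 h. apply gcancel_l in h.
  rewrite (gmulA s), (gmulA a), <- e2, <- gmulA in h. apply gcancel_l in h.
  apply (gcancel_l (Y^-1)). rewrite gmulA, h, <- gmulA, gmulVl, gmul1r, gKVl. reflexivity.
Qed.

Lemma b1_deriv (s a Z W ds da : G) : ds⋅s = a⋅(s⋅da^-1) ->
  Z⋅(ds⋅s) = a⋅(W⋅(s⋅da^-1)) -> a⋅W = Z⋅a.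
Proof.
  intros e2 h. rewrite e2, !gmulA in h. apply gcancel_r in h. apply gcancel_r in h. symmetry; exact h.
Qed.

Lemma comm_inv (s Y : G) : s⋅Y = Y⋅s -> s⋅Y^-1 = Y^-1⋅s.
Proof.
  intro h. apply (gcancel_l Y). rewrite gKl, gmulA, <- h, <- gmulA, gmulVr, gmul1r. reflexivity.
Qed.

Lemma conj_inv (a u v : G) : a⋅u = v⋅a -> a⋅u^-1 = v^-1⋅a.
Proof.
  intro h. apply (gcancel_l v). rewrite gKl, gmulA, <- h, <- gmulA, gmulVr, gmul1r. reflexivity.
Qed.

Lemma core1 (s ds Z Y X r : G) : s⋅Z = Z⋅s -> s⋅X = X⋅s -> s⋅Y = Y⋅s -> ds⋅s⋅ds = s⋅ds⋅s ->
 Z⋅(ds⋅(Y^-1⋅(s⋅r))) = s⋅(Z⋅(ds⋅(X^-1⋅(s⋅(X⋅(ds^-1⋅(Y^-1⋅r))))))).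
Proof.
  intros hZ hX hY br.
  assert (cX: forall t, s⋅(X⋅t) = X⋅(s⋅t)) by (intro; rewrite gmulA, hX, <- gmulA; reflexivity).
  assert (cZ: forall t, s⋅(Z⋅t) = Z⋅(s⋅t)) by (intro; rewrite gmulA, hZ, <- gmulA; reflexivity).
  assert (cY: forall t, s⋅(Y^-1⋅t) = Y^-1⋅(s⋅t)) by (intro; rewrite gmulA, (comm_inv _ _ hY), <- gmulA; reflexivity).
  rewrite cX, gKVl, cZ. f_equal. rewrite <- cY. rewrite !gmulA, <- br, <- !gmulA, gKl. reflexivity.
Qed.

Lemma core2 (s a ds da Z W Y r : G) : a⋅W = Z⋅a -> ds⋅s⋅da = a⋅s -> s⋅Y = Y⋅s ->
 Z⋅(ds⋅(Y^-1⋅(s⋅r))) = a⋅(W⋅(s⋅(da^-1⋅(Y^-1⋅r)))).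
Proof.
  intros hW r3 hY.
  assert (cY: forall t, s⋅(Y^-1⋅t) = Y^-1⋅(s⋅t)) by (intro; rewrite gmulA, (comm_inv _ _ hY), <- gmulA; reflexivity).
  rewrite (gmulA a W), hW, <- gmulA. f_equal. rewrite <- cY. rewrite !gmulA, <- r3, <- !gmulA, gKl. reflexivity.
Qed.

Lemma core3 (s a ds da Z Xd X2 : G) : a⋅Xd = X2⋅a -> s⋅Z = Z⋅s -> s⋅ds⋅a = da⋅s ->
 Z⋅(da⋅(s⋅Xd^-1)) = s⋅(Z⋅(ds⋅(X2^-1⋅a))).
Proof.
  intros hX hZ r4.
  assert (cZ: forall t, s⋅(Z⋅t) = Z⋅(s⋅t)) by (intro; rewrite gmulA, hZ, <- gmulA; reflexivity).
  rewrite <- (conj_inv _ _ _ hX), cZ. f_equal. rewrite !gmulA, r4. reflexivity.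
Qed.

Variable d : G -> G.
Hypothesis E : is_endo d.
Variables s a : G.

Lemma iter_endo n (x y : G) : Nat.iter n d (x⋅y) = Nat.iter n d x ⋅ Nat.iter n d y.
Proof. induction n; simpl; [reflexivity| rewrite IHn, E; reflexivity]. Qed.
Lemma iter_add n m (x : G) : Nat.iter (n+m) d x = Nat.iter n d (Nat.iter m d x).
Proof. induction n; simpl; [reflexivity| rewrite IHn; reflexivity]. Qed.

Lemma gen_sub_d x : gen_sub d s a x -> gen_sub d s a (d x).
Proof.
  induction 1.
  - destruct i as [|i]; [inversion H|]. unfold idx.
    replace (S i - 1) with i by (destruct i; reflexivity).
    change (d (Nat.iter i d s)) with (idx d s (S (S i))). constructor. auto.
  - destruct i as [|i]; [inversion H|]. unfold idx.
    replace (S i - 1) with i by (destruct i; reflexivity).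
    change (d (Nat.iter i d a)) with (idx d a (S (S i))). constructor. auto.
  - rewrite (d_one _ E). constructor.
  - rewrite E. constructor; auto.
  - rewrite (d_inv _ E). constructor; auto.
Qed.

Definition base : Prop :=
  (d s ⋅ s) ⋅ d s = (s ⋅ d s) ⋅ s /\
  (s ⋅ d s) ⋅ a = d a ⋅ s /\
  (d s ⋅ s) ⋅ d a = a ⋅ s /\
  (forall m, Nat.iter (2+m) d s ⋅ s = s ⋅ Nat.iter (2+m) d s) /\
  (forall m, Nat.iter (2+m) d a ⋅ s = s ⋅ Nat.iter (2+m) d a) /\
  (forall m, a ⋅ Nat.iter (1+m) d s = Nat.iter (2+m) d s ⋅ a) /\
  (forall m, a ⋅ Nat.iter (1+m) d a = Nat.iter (2+m) d a ⋅ a).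

Lemma gen_s : gen_sub d s a s.
Proof. exact (@gen_sig G d s a 1 (le_n 1)). Qed.
Lemma gen_iter_s m : gen_sub d s a (Nat.iter m d s).
Proof. pose proof (@gen_sig G d s a (S m)) as h. unfold idx in h. replace (S m - 1) with m in h by lia. apply h. auto with arith. Qed.
Lemma gen_iter_a m : gen_sub d s a (Nat.iter m d a).
Proof. pose proof (@gen_a G d s a (S m)) as h. unfold idx in h. replace (S m - 1) with m in h by lia. apply h. auto with arith. Qed.

Lemma ALD_base : is_ALD (gen_sub d s a) (star d s) (circ d a) -> base.
Proof.
  intros [_ [_ ID]].
  destruct (ID gone gone gone (@gen_one G d s a) (@gen_one G d s a) (@gen_one G d s a)) as [e1 [e2 e3]].
  assert (Hy : forall y, gen_sub d s a y -> star d s gone (star d s y gone) = star d s (circ d a gone y) gone) by (intros; apply (ID gone y gone); auto using gen_one).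
  assert (Hz : forall z, gen_sub d s a z -> star d s gone (star d s gone z) = star d s (circ d a gone gone) z) by (intros; apply (ID gone gone z); auto using gen_one).
  unfold star, circ in *.
  gnormH E e1. gnormH E e2. gnormH E e3.
  assert (Ay : forall y, gen_sub d s a y -> s ⋅ d (d y) = d (d y) ⋅ s).
  { intros y hy. specialize (Hy y hy). gnormH E Hy. eapply comm_deriv; eauto. }
  assert (Bz : forall z, gen_sub d s a z -> a ⋅ d z = d (d z) ⋅ a).
  { intros z hz. specialize (Hz z hz). gnormH E Hz. eapply b1_deriv; eauto. }
  split; [|split; [|split; [|split; [|split; [|split]]]]].
  - apply (f_equal (fun u => u ⋅ d s)) in e1. gnormH E e1. gnorm E. exact e1.
  - gnorm E. symmetry. exact e3.
  - apply (f_equal (fun u => u ⋅ d a)) in e2. gnormH E e2. gnorm E. exact e2.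
  - intro m. symmetry. exact (Ay _ (gen_iter_s m)).
  - intro m. symmetry. exact (Ay _ (gen_iter_a m)).
  - intro m. exact (Bz _ (gen_iter_s m)).
  - intro m. exact (Bz _ (gen_iter_a m)).
Qed.

Lemma base_B : base -> B_relations d s a.
Proof.
  intros [br [r4 [r3 [A1s [A1a [B1s B1a]]]]]].
  unfold B_relations; intros i j hi hj. unfold idx.
  destruct i as [|i']; [lia|]. destruct j as [|j']; [lia|].
  split; [|split].
  - intro h. replace (S i' - 1) with (i' + 0) by lia.
    replace (S j' - 1) with (i' + (2 + (j'-i'-2))) by lia.
    rewrite ?(iter_add i'), ?(iter_add j'). change (Nat.iter 0 d s) with s.
    split; rewrite <- !iter_endo; [rewrite A1s | rewrite A1a]; reflexivity.
  - intro h. replace (S i' + 1 - 1) with (j' + (2 + (i'-j'-1))) by lia.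
    replace (S i' - 1) with (j' + (1 + (i'-j'-1))) by lia.
    replace (S j' - 1) with (j' + 0) by lia.
    rewrite ?(iter_add i'), ?(iter_add j'). change (Nat.iter 0 d a) with a.
    split; rewrite <- !iter_endo; [rewrite B1s | rewrite B1a]; reflexivity.
  - intro h. assert (j' = i' + 1) by lia. subst j'. replace (S (i' + 1) - 1) with (i' + 1) by lia.
    replace (S i' - 1) with (i' + 0) by lia.
    rewrite ?(iter_add i'), ?(iter_add j'). change (Nat.iter 0 d a) with a. change (Nat.iter 0 d s) with s.
    change (Nat.iter 1 d a) with (d a). change (Nat.iter 1 d s) with (d s).
    split; [|split]; rewrite <- !iter_endo; [rewrite br | rewrite r4 | rewrite r3]; reflexivity.
Qed.

Lemma B_base : B_relations d s a -> base.
Proof.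
  intro HB. unfold B_relations in HB.
  assert (Hc := HB 1 2 (le_n 1) ltac:(lia)). destruct Hc as [_ [_ Hc]].
  destruct (Hc eq_refl) as [br [r4 r3]]. unfold idx in br, r4, r3. simpl in br, r4, r3.
  split; [exact br|split;[exact r4|split;[exact r3|]]].
  split; [|split; [|split]]; intro m.
  - destruct (HB 1 (3+m) (le_n 1) ltac:(lia)) as [[h _] _]; [lia|]. unfold idx in h.
    replace (3+m-1) with (2+m) in h by lia. exact h.
  - destruct (HB 1 (3+m) (le_n 1) ltac:(lia)) as [[_ h] _]; [lia|]. unfold idx in h.
    replace (3+m-1) with (2+m) in h by lia. exact h.
  - destruct (HB (2+m) 1 ltac:(lia) (le_n 1)) as [_ [[h _] _]]; [lia|]. unfold idx in h.
    replace (2+m-1) with (1+m) in h by lia. replace (2+m+1-1) with (2+m) in h by lia. exact h.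
  - destruct (HB (2+m) 1 ltac:(lia) (le_n 1)) as [_ [[_ h] _]]; [lia|]. unfold idx in h.
    replace (2+m-1) with (1+m) in h by lia. replace (2+m+1-1) with (2+m) in h by lia. exact h.
Qed.

Lemma base_ALD : base -> is_ALD (gen_sub d s a) (star d s) (circ d a).
Proof.
  intros [br [r4 [r3 [A1s [A1a [B1s B1a]]]]]].
  assert (hs := gen_s). assert (ha : gen_sub d s a a) by exact (gen_iter_a 0).
  assert (R2 : forall y, gen_sub d s a y -> s ⋅ d (d y) = d (d y) ⋅ s).
  { induction 1.
    - destruct i as [|i]; [lia|]. unfold idx. replace (S i - 1) with i by lia. symmetry. exact (A1s i).
    - destruct i as [|i]; [lia|]. unfold idx. replace (S i - 1) with i by lia. symmetry. exact (A1a i).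
    - rewrite !(d_one _ E), gmul1l, gmul1r. reflexivity.
    - rewrite !E. rewrite gmulA, IHgen_sub1, <- gmulA, IHgen_sub2, gmulA. reflexivity.
    - rewrite !(d_inv _ E). apply comm_inv. assumption. }
  assert (R5 : forall y, gen_sub d s a y -> a ⋅ d y = d (d y) ⋅ a).
  { induction 1.
    - destruct i as [|i]; [lia|]. unfold idx. replace (S i - 1) with i by lia. exact (B1s i).
    - destruct i as [|i]; [lia|]. unfold idx. replace (S i - 1) with i by lia. exact (B1a i).
    - rewrite !(d_one _ E), gmul1l, gmul1r. reflexivity.
    - rewrite !E. rewrite gmulA, IHgen_sub1, <- gmulA, IHgen_sub2, gmulA. reflexivity.
    - rewrite !(d_inv _ E). apply conj_inv. assumption. }
  split; [|split].
  - intros x y hx hy. unfold star. repeat constructor; auto using gen_sub_d.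
  - intros x y hx hy. unfold circ. repeat constructor; auto using gen_sub_d.
  - intros x y z hx hy hz. split; [|split]; unfold star, circ; gnorm E.
    + do 2 f_equal. apply core1; auto.
    + do 2 f_equal. apply core2; auto using R5.
    + do 2 f_equal. apply core3; auto.
Qed.
End M.

Theorem proposition2p12 (G : Group) (d : G -> G) (s a : G) :
  is_endo d ->
  (is_ALD (gen_sub d s a) (star d s) (circ d a) <-> B_relations d s a).
Proof.
  intro E. split; intro h.
  - apply (@base_B G d E s a). apply (@ALD_base G d E s a). exact h.
  - apply (@base_ALD G d E s a). apply B_base. exact h.
Qed.
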